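(* Let $r=\frac{1}{2\pi}$ and let $F$ be the regular $500$-gon with vertices $\bigl(r\cos\frac{k\pi}{250}, r\sin\frac{k\pi}{250}\bigr)$, $k=0,\dots,499$. For $z=(x_1,y_1,x_2,y_2,\theta)\in\mathbb{R}^5$ let $R(z)$ be the closed rectangle with sides parallel to the coordinate axes, center $(x_1,y_1)$, horizontal side length $0.4625$ and vertical side length $0.0375$, and let $T(z)$ be the closed equilateral triangle with vertices $\bigl(x_2+\frac{\sqrt3}{9}\cos(\theta+\frac{2\pi j}{3}),\, y_2+\frac{\sqrt3}{9}\sin(\theta+\frac{2\pi j}{3})\bigr)$, $j=0,1,2$ (side length $\frac13$). Let $f(z)$ be the area of the convex hull of $F\cup R(z)\cup T(z)$. Then $f$ is a convex function of each of the coordinates $x_1$, $y_1$, $x_2$, $y_2$ separately (with the other four coordinates fixed). *)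

(* Defs.v *)
From HB Require Import structures.
From mathcomp Require Import all_boot all_order all_algebra.
From mathcomp Require Import all_classical all_reals all_analysis.
Set Implicit Arguments. Unset Strict Implicit. Unset Printing Implicit Defensive.
Import Order.TTheory GRing.Theory Num.Theory.
Local Open Scope classical_set_scope.
Local Open Scope ring_scope.

Definition conv_hull {R : realType} (S : set (R * R)) : set (R * R) :=
  [set p | exists n (w : 'I_n -> R) (q : 'I_n -> R * R),
     [/\ (forall i, 0 <= w i), \sum_(i < n) w i = 1, (forall i, S (q i)) &
         p = (\sum_(i < n) w i * (q i).1, \sum_(i < n) w i * (q i).2)]].

Definition area {R : realType} (A : set (R * R)) : R :=
  fine (((@lebesgue_measure R) \x (@lebesgue_measure R)) A)%E.

Definition rr {R : realType} : R := (2 * pi)^-1.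

Definition F500 {R : realType} : set (R * R) :=
  conv_hull [set p | exists k : nat, (k < 500)%N /\
     p = (rr * cos (k%:R * pi / 250), rr * sin (k%:R * pi / 250))].

Definition Rect {R : realType} (x1 y1 : R) : set (R * R) :=
  [set p | `|p.1 - x1| <= (4625 / 10000) / 2 /\ `|p.2 - y1| <= (375 / 10000) / 2].

Definition Tri {R : realType} (x2 y2 theta : R) : set (R * R) :=
  conv_hull [set p | exists j : nat, (j < 3)%N /\
     p = (x2 + Num.sqrt 3 / 9 * cos (theta + 2 * pi * j%:R / 3),
          y2 + Num.sqrt 3 / 9 * sin (theta + 2 * pi * j%:R / 3))].

Definition fz {R : realType} (x1 y1 x2 y2 theta : R) : R :=
  area (conv_hull (F500 `|` Rect x1 y1 `|` Tri x2 y2 theta)).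

Definition convex_R {R : realType} (g : R -> R) : Prop :=
  @convex_function R R^o setT (g : convex_lmodType R^o -> R^o).

(* Main.v *)
Require Import Defs.
From HB Require Import structures.
From mathcomp Require Import all_boot all_order all_algebra.
From mathcomp Require Import all_classical all_reals all_analysis.
From mathcomp Require Import measurable_realfun.
From mathcomp Require Import ring lra.
Import Order.TTheory GRing.Theory Num.Theory.
Import numFieldNormedType.Exports.
Set Implicit Arguments. Unset Strict Implicit. Unset Printing Implicit Defensive.
Local Open Scope classical_set_scope.
Local Open Scope ring_scope.


Section ConvA.
Variable R : realType.
Implicit Types S C X Y : set (R * R).

Definition cmb (l : R) (p q : R * R) : R * R :=
  (l * p.1 + (1 - l) * q.1, l * p.2 + (1 - l) * q.2).

Definition cvx C := forall l p q, 0 <= l -> l <= 1 -> C p -> C q -> C (cmb l p q).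

Lemma conv_sub S : S `<=` conv_hull S.
Proof.
move=> p Sp; exists 1%N, (fun _ => 1), (fun _ => p); split => //.
  by rewrite big_ord1.
by rewrite !big_ord1 !mul1r; case: p {Sp}.
Qed.

Lemma conv_mono S1 S2 : S1 `<=` S2 -> conv_hull S1 `<=` conv_hull S2.
Proof.
move=> S12 p [n [w [u [w0 w1 Su ->]]]].
by exists n, w, u; split => // i; apply: S12.
Qed.

Lemma sum_split n m (F : 'I_n + 'I_m -> R) :
  \sum_(i < n + m) F (fintype.split i) = \sum_(i < n) F (inl i) + \sum_(i < m) F (inr i).
Proof.
rewrite big_split_ord /=; congr (_ + _); apply: eq_bigr => i _.
  by rewrite (unsplitK (inl i : 'I_n + 'I_m)).
by rewrite (unsplitK (inr i : 'I_n + 'I_m)).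
Qed.

Lemma conv_cvx S : cvx (conv_hull S).
Proof.
move=> l p q l0 l1 [n [w [u [w0 w1 Su ->]]]] [m [w' [u' [w0' w1' Su' ->]]]].
pose sw (s : 'I_n + 'I_m) := match s with inl j => l * w j | inr k => (1 - l) * w' k end.
pose su (s : 'I_n + 'I_m) := match s with inl j => u j | inr k => u' k end.
exists (n + m)%N, (fun i => sw (fintype.split i)), (fun i => su (fintype.split i)); split.
- move=> i; rewrite /sw; case: (fintype.split i) => j; apply: mulr_ge0 => //; lra.
- rewrite (sum_split sw) /sw -!mulr_sumr w1 w1'; lra.
- by move=> i; rewrite /su; case: (fintype.split i).
- rewrite /cmb /=; congr (_, _).
  + rewrite (sum_split (fun s => sw s * (su s).1)) /sw /su /= !mulr_sumr.
    by congr (_ + _); apply: eq_bigr => i _; rewrite mulrA.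
  + rewrite (sum_split (fun s => sw s * (su s).2)) /sw /su /= !mulr_sumr.
    by congr (_ + _); apply: eq_bigr => i _; rewrite mulrA.
Qed.

Lemma conv_min S C : cvx C -> S `<=` C -> conv_hull S `<=` C.
Proof.
move=> cC SC p [n [w [u [w0 w1 Su ->]]]].
elim: n w u w0 w1 Su => [|n IH] w u w0 w1 Su.
  by move: w1; rewrite big_ord0 => /eqP; rewrite eq_sym oner_eq0.
rewrite !big_ord_recr /=.
move: w1; rewrite big_ord_recr /= => w1.
set a := w ord_max in w1 *.
have sge0 : 0 <= \sum_(i < n) w (widen_ord (leqnSn n) i).
  by apply: sumr_ge0 => i _.
have [a1|a1] := eqVneq a 1.
  have s0 : \sum_(i < n) w (widen_ord (leqnSn n) i) = 0 by lra.
  have wi0 : forall i : 'I_n, w (widen_ord (leqnSn n) i) = 0.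
    move=> i; apply/eqP; move: s0 => /eqP; rewrite psumr_eq0; last by move=> j _.
    by move=> /allP /(_ i); rewrite mem_index_enum => /(_ isT).
  rewrite !big1 ?add0r ?a1 ?mul1r; last by move=> i _; rewrite wi0 mul0r.
    by case: (u ord_max) (SC _ (Su ord_max)).
  by move=> i _; rewrite wi0 mul0r.
have b0 : 0 < 1 - a.
  have : a <= 1 by lra.
  by rewrite le_eqVlt (negbTE a1) /= => ?; lra.
pose w' (i : 'I_n) := w (widen_ord (leqnSn n) i) / (1 - a).
have H1 : forall i, 0 <= w' i.
  by move=> i; rewrite /w'; apply: divr_ge0 => //; lra.
have H2 : \sum_(i < n) w' i = 1.
  rewrite /w' -mulr_suml (_ : \sum_(i < n) w _ = 1 - a); last by lra.
  by rewrite divff // gt_eqF.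
have Cq := IH w' _ H1 H2 (fun i => Su (widen_ord (leqnSn n) i)).
have Ca : 0 <= a <= 1 by apply/andP; split; [apply: w0|lra].
have := cC a (u ord_max) _ (andP Ca).1 (andP Ca).2 (SC _ (Su ord_max)) Cq.
rewrite /cmb /=; congr C; congr (_, _).
- rewrite mulr_sumr addrC; congr (_ + _); apply: eq_bigr => i _; rewrite /w'.
  field; rewrite gt_eqF //.
- rewrite mulr_sumr addrC; congr (_ + _); apply: eq_bigr => i _; rewrite /w'.
  field; rewrite gt_eqF //.
Qed.


Lemma conv_cvx_eq C : cvx C -> conv_hull C = C.
Proof.
move=> cC; apply/seteqP; split; first exact: conv_min.
exact: conv_sub.
Qed.

Lemma conv_eq X Y : X `<=` conv_hull Y -> Y `<=` conv_hull X ->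
  conv_hull X = conv_hull Y.
Proof.
move=> XY YX; apply/seteqP; split.
  exact: (conv_min (@conv_cvx Y) XY).
exact: (conv_min (@conv_cvx X) YX).
Qed.

Lemma conv_hullU X Y : conv_hull (conv_hull X `|` conv_hull Y) = conv_hull (X `|` Y).
Proof.
apply: conv_eq => p.
- case=> Hp.
  + by apply: (conv_mono (S1 := X)) => // ? ?; left.
  + by apply: (conv_mono (S1 := Y)) => // ? ?; right.
- by case=> Hp; apply: conv_sub; [left|right]; apply: conv_sub.
Qed.

Lemma cvx1 (x : R * R) : cvx [set x].
Proof.
move=> l p q _ _ -> ->; rewrite /cmb; case: x => a b /=; congr (_, _) => /=; ring.
Qed.

Lemma conv1 (x : R * R) : conv_hull [set x] = [set x].
Proof. exact/conv_cvx_eq/cvx1. Qed.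

Definition join C1 C2 : set (R * R) :=
  [set p | exists l a b, [/\ 0 <= l, l <= 1, C1 a, C2 b & p = cmb l a b]].

Lemma id_i (m l1 l2 x1 x2 y1 y2 L : R) :
  L = m * l1 + (1 - m) * l2 -> L != 0 -> 1 - L != 0 ->
  m * (l1 * x1 + (1 - l1) * y1) + (1 - m) * (l2 * x2 + (1 - l2) * y2) =
  L * (m * l1 / L * x1 + (1 - m * l1 / L) * x2) +
  (1 - L) * (m * (1 - l1) / (1 - L) * y1 + (1 - m * (1 - l1) / (1 - L)) * y2).
Proof. by move=> -> L0 L1; field; apply/andP; split. Qed.

Lemma id_ii (m l1 l2 x1 x2 y1 y2 : R) :
  m * l1 = 0 -> (1 - m) * l2 = 0 ->
  m * (l1 * x1 + (1 - l1) * y1) + (1 - m) * (l2 * x2 + (1 - l2) * y2) =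
  0 * x1 + (1 - 0) * (m * y1 + (1 - m) * y2).
Proof.
move=> e1 e2; apply/eqP; rewrite -subr_eq0.
have -> : m * (l1 * x1 + (1 - l1) * y1) + (1 - m) * (l2 * x2 + (1 - l2) * y2) -
  (0 * x1 + (1 - 0) * (m * y1 + (1 - m) * y2)) =
  (m * l1) * (x1 - y1) + ((1 - m) * l2) * (x2 - y2) by ring.
by rewrite e1 e2 !mul0r addr0.
Qed.

Lemma id_iii (m l1 l2 x1 x2 y1 y2 : R) :
  m * (1 - l1) = 0 -> (1 - m) * (1 - l2) = 0 ->
  m * (l1 * x1 + (1 - l1) * y1) + (1 - m) * (l2 * x2 + (1 - l2) * y2) =
  1 * (m * x1 + (1 - m) * x2) + (1 - 1) * y1.
Proof.
move=> e1 e2; apply/eqP; rewrite -subr_eq0.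
have -> : m * (l1 * x1 + (1 - l1) * y1) + (1 - m) * (l2 * x2 + (1 - l2) * y2) -
  (1 * (m * x1 + (1 - m) * x2) + (1 - 1) * y1) =
  (m * (1 - l1)) * (y1 - x1) + ((1 - m) * (1 - l2)) * (y2 - x2) by ring.
by rewrite e1 e2 !mul0r addr0.
Qed.

Lemma join_cvx C1 C2 : cvx C1 -> cvx C2 -> cvx (join C1 C2).
Proof.
move=> c1 c2 m P1 P2 m0 m1 [l1 [a1 [b1 [l10 l11 Ca1 Cb1 ->]]]]
  [l2 [a2 [b2 [l20 l21 Ca2 Cb2 ->]]]].
set L := m * l1 + (1 - m) * l2.
have L0 : 0 <= L by rewrite /L; apply: addr_ge0; apply: mulr_ge0 => //; lra.
have L1 : L <= 1.
  rewrite /L; have : m * l1 <= m * 1 by apply: ler_wpM2l.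
  have : (1 - m) * l2 <= (1 - m) * 1 by apply: ler_wpM2l => //; lra.
  lra.
have [Le0|Lne0] := eqVneq L 0.
  have e1 : m * l1 = 0.
    apply/eqP; rewrite eq_le mulr_ge0 // andbT.
    have : 0 <= (1 - m) * l2 by apply: mulr_ge0 => //; lra.
    move: Le0; rewrite /L; lra.
  have e2 : (1 - m) * l2 = 0 by move: Le0; rewrite /L e1; lra.
  exists 0, a1, (cmb m b1 b2); split => //; first exact: c2.
  by rewrite /cmb /=; congr (_, _); apply: id_ii.
have [Le1|Lne1] := eqVneq L 1.
  have e1 : m * (1 - l1) = 0.
    apply/eqP; rewrite eq_le mulr_ge0 ?andbT //; last by lra.
    have : 0 <= (1 - m) * (1 - l2) by apply: mulr_ge0; lra.
    move: Le1; rewrite /L; lra.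
  have e2 : (1 - m) * (1 - l2) = 0 by move: Le1 e1; rewrite /L; lra.
  exists 1, (cmb m a1 a2), b1; split => //; first exact: c1.
  by rewrite /cmb /=; congr (_, _); apply: id_iii.
have Lp : 0 < L by rewrite lt_neqAle eq_sym Lne0.
have Lq : 0 < 1 - L by rewrite subr_gt0 lt_neqAle Lne1 L1.
have ml1 : m * l1 <= L.
  rewrite /L; have : 0 <= (1 - m) * l2 by apply: mulr_ge0 => //; lra.
  lra.
have ml2 : m * (1 - l1) <= 1 - L.
  rewrite /L; have : 0 <= (1 - m) * (1 - l2) by apply: mulr_ge0; lra.
  lra.
exists L, (cmb (m * l1 / L) a1 a2), (cmb (m * (1 - l1) / (1 - L)) b1 b2); split => //.
- apply: c1 => //.
  + by apply: divr_ge0 => //; apply: mulr_ge0.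
  + by rewrite ler_pdivrMr // mul1r.
- apply: c2 => //.
  + by apply: divr_ge0; [apply: mulr_ge0 => //; lra|lra].
  + by rewrite ler_pdivrMr // mul1r.
- rewrite /cmb /=; congr (_, _); apply: id_i; rewrite // gt_eqF //.
Qed.

Lemma conv_join C1 C2 : cvx C1 -> cvx C2 -> C1 !=set0 -> C2 !=set0 ->
  conv_hull (C1 `|` C2) = join C1 C2.
Proof.
move=> c1 c2 [a0 Ca0] [b0 Cb0]; apply/seteqP; split.
- apply: conv_min; first exact: join_cvx.
  move=> p [Cp|Cp].
  + exists 1, p, b0; split => //; rewrite /cmb; case: p {Cp} => x y /=.
    by congr (_, _); ring.
  + exists 0, a0, p; split => //; rewrite /cmb; case: p {Cp} => x y /=.
    by congr (_, _); ring.
- move=> p [l [a [b [l0 l1 Ca Cb ->]]]]; apply: conv_cvx => //; apply: conv_sub.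
  by left. by right.
Qed.

Definition pts (f : nat -> R * R) N := [set p | exists k, (k < N)%N /\ p = f k].

Lemma pts1 f : pts f 1 = [set f 0%N].
Proof.
apply/seteqP; split => p.
  by case=> k [+ ->]; rewrite ltnS leqn0 => /eqP ->.
by move=> ->; exists 0%N.
Qed.

Lemma ptsS f N : pts f N.+1 = pts f N `|` [set f N].
Proof.
apply/seteqP; split => p.
- case=> k [+ ->]; rewrite ltnS leq_eqVlt => /orP [/eqP ->|kN]; first by right.
  by left; exists k.
- by case=> [[k [kN ->]]|->]; [exists k; split => //; apply: ltnW|exists N].
Qed.

Lemma conv_ptsS f N : conv_hull (pts f N.+2) = join (conv_hull (pts f N.+1)) [set f N.+1].
Proof.
rewrite ptsS -conv_hullU conv1 conv_join //.
- exact: conv_cvx.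
- exact: cvx1.
- by exists (f 0%N); apply: conv_sub; exists 0%N.
- by exists (f N.+1).
Qed.

Lemma conv_shift S S' (d : R * R) p : conv_hull S p ->
  (forall u, S u -> S' (u.1 + d.1, u.2 + d.2)) -> conv_hull S' (p.1 + d.1, p.2 + d.2).
Proof.
move=> [n [w [u [w0 w1 Su ->]]]] SS'.
exists n, w, (fun i => ((u i).1 + d.1, (u i).2 + d.2)); split => //.
- by move=> i; apply: SS'.
- rewrite /=; congr (_, _).
  + apply/esym; rewrite (eq_bigr (fun i => w i * (u i).1 + w i * d.1)); last by move=> i _; ring.
    by rewrite big_split /= -mulr_suml w1 mul1r.
  + apply/esym; rewrite (eq_bigr (fun i => w i * (u i).2 + w i * d.2)); last by move=> i _; ring.
    by rewrite big_split /= -mulr_suml w1 mul1r.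
Qed.

Lemma transport (S : R -> set (R * R)) (v : R * R) :
  (forall r q, S r q -> (forall t, S t q) \/
     (forall t, S t (q.1 + (t - r) * v.1, q.2 + (t - r) * v.2))) ->
  forall r p, conv_hull (S r) p -> exists sg : R, forall t,
    conv_hull (S t) (p.1 + (t - r) * sg * v.1, p.2 + (t - r) * sg * v.2).
Proof.
move=> Hm r p [n [w [u [w0 w1 Su ->]]]].
pose c (i : 'I_n) : R := if pselect (forall t, S t (u i)) then 0 else 1.
exists (\sum_(i < n) w i * c i) => t.
exists n, w, (fun i => ((u i).1 + (t - r) * c i * v.1, (u i).2 + (t - r) * c i * v.2)).
split => //.
- move=> i; rewrite /c; case: pselect => [H|H].
    by rewrite !mulr0 !mul0r !addr0; case: (u i) (H t).
  case: (Hm r (u i) (Su i)) => // H'.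
  by rewrite !mulr1; apply: H'.
- rewrite /=; congr (_, _).
  + rewrite !mulr_sumr !mulr_suml -big_split /=; apply: eq_bigr => i _; ring.
  + rewrite !mulr_sumr !mulr_suml -big_split /=; apply: eq_bigr => i _; ring.
Qed.

End ConvA.

Section B.
Variable R : realType.

Lemma open_measurable2 (U : set (R * R)) : open U ->
  @measurable _ (measurableTypeR R * measurableTypeR R)%type U.
Proof.
move=> oU.
pose rect (q : (rat * rat) * (rat * rat)) : set (R * R) :=
  `]ratr q.1.1, ratr q.1.2[%classic `*` `]ratr q.2.1, ratr q.2.2[%classic.
pose G (n : nat) : set (R * R) := match @unpickle ((rat * rat) * (rat * rat))%type n with
  | Some q => if pselect (rect q `<=` U) then rect q else set0
  | None => set0 end.
have -> : U = \bigcup_n G n.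
  apply/seteqP; split; last first.
    move=> p [n _]; rewrite /G; case: unpickle => [q|//].
    by case: pselect => // H /H.
  move=> p Up.
  have := oU p Up.
  case => -[A B] /= [nA nB] sAB.
  move/nbhs_ballP : nA => [e1 e1p hA].
  move/nbhs_ballP : nB => [e2 e2p hB].
  move: e1p e2p => /= e1p e2p.
  have [a aI] : exists a : rat, ratr a \in `]p.1 - e1, p.1[ by apply: rat_in_itvoo; lra.
  have [b bI] : exists b : rat, ratr b \in `]p.1, p.1 + e1[ by apply: rat_in_itvoo; lra.
  have [c cI] : exists c : rat, ratr c \in `]p.2 - e2, p.2[ by apply: rat_in_itvoo; lra.
  have [d dI] : exists d : rat, ratr d \in `]p.2, p.2 + e2[ by apply: rat_in_itvoo; lra.
  move: aI bI cI dI; rewrite !in_itv /= => /andP[a1 a2] /andP[b1 b2] /andP[c1 c2] /andP[d1 d2].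
  exists (pickle ((a, b), (c, d))); first by [].
  rewrite /G pickleK.
  case: pselect => H; last first.
    exfalso; apply: H => z [/= z1 z2]; apply: sAB; split.
    - apply: hA; rewrite ball_itv /=; move: z1; rewrite /= !in_itv /= => /andP[? ?].
      by apply/andP; split; lra.
    - apply: hB; rewrite ball_itv /=; move: z2; rewrite /= !in_itv /= => /andP[? ?].
      by apply/andP; split; lra.
  by split; rewrite /= in_itv /=; apply/andP; split.
apply: bigcupT_measurable => n; rewrite /G; case: unpickle => [q|//].
case: pselect => [H|H]; last exact: measurable0.
apply: measurableX; exact: measurable_itv.
Qed.


Lemma cont_fst {T U : topologicalType} : continuous (@fst T U).
Proof. by move=> z; exact: cvg_fst. Qed.

Lemma cont_snd {T U : topologicalType} : continuous (@snd T U).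
Proof. by move=> z; exact: cvg_snd. Qed.

Lemma cont_cmb : continuous (fun z : R * ((R * R) * (R * R)) => cmb z.1 z.2.1 z.2.2).
Proof.
have c1 : continuous (fun z : R * ((R * R) * (R * R)) => z.1) by exact: cont_fst.
have c2 : continuous (fun z : R * ((R * R) * (R * R)) => z.2.1.1).
  move=> z; apply: (continuous_comp (f := fun z : R * ((R * R) * (R * R)) => z.2.1)).
    apply: (continuous_comp (f := snd)); [exact: cont_snd|exact: cont_fst].
  exact: cont_fst.
have c3 : continuous (fun z : R * ((R * R) * (R * R)) => z.2.1.2).
  move=> z; apply: (continuous_comp (f := fun z : R * ((R * R) * (R * R)) => z.2.1)).
    apply: (continuous_comp (f := snd)); [exact: cont_snd|exact: cont_fst].
  exact: cont_snd.
have c4 : continuous (fun z : R * ((R * R) * (R * R)) => z.2.2.1).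
  move=> z; apply: (continuous_comp (f := fun z : R * ((R * R) * (R * R)) => z.2.2)).
    apply: (continuous_comp (f := snd)); [exact: cont_snd|exact: cont_snd].
  exact: cont_fst.
have c5 : continuous (fun z : R * ((R * R) * (R * R)) => z.2.2.2).
  move=> z; apply: (continuous_comp (f := fun z : R * ((R * R) * (R * R)) => z.2.2)).
    apply: (continuous_comp (f := snd)); [exact: cont_snd|exact: cont_snd].
  exact: cont_snd.
have c0 : continuous (fun z : R * ((R * R) * (R * R)) => 1 - z.1).
  by move=> z; apply: continuousB; [exact: cst_continuous|exact: c1].
have g1 : continuous (fun x : R * ((R * R) * (R * R)) => x.1 * x.2.1.1 + (1 - x.1) * x.2.2.1).
  move=> z; apply: (@continuousD _ _ _ (fun x : R * ((R * R) * (R * R)) => x.1 * x.2.1.1) (fun x => (1 - x.1) * x.2.2.1)).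
    by apply: continuousM; [exact: c1|exact: c2].
  by apply: continuousM; [exact: c0|exact: c4].
have g2 : continuous (fun x : R * ((R * R) * (R * R)) => x.1 * x.2.1.2 + (1 - x.1) * x.2.2.2).
  move=> z; apply: (@continuousD _ _ _ (fun x : R * ((R * R) * (R * R)) => x.1 * x.2.1.2) (fun x => (1 - x.1) * x.2.2.2)).
    by apply: continuousM; [exact: c1|exact: c3].
  by apply: continuousM; [exact: c0|exact: c5].
move=> z; rewrite /cmb; exact: (cvg_pair (g1 z) (g2 z)).
Qed.

Lemma join_compact (C1 C2 : set (R * R)) : compact C1 -> compact C2 ->
  compact (join C1 C2).
Proof.
move=> k1 k2.
have -> : join C1 C2 = (fun z : R * ((R * R) * (R * R)) => cmb z.1 z.2.1 z.2.2) @`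
   (`[0, 1]%classic `*` (C1 `*` C2)).
  apply/seteqP; split.
  - move=> p [l [a [b [l0 l1 Ca Cb ->]]]]; exists (l, (a, b)) => //.
    by split => //=; rewrite in_itv /= l0 l1.
  - move=> p [[l [a b]] [/= + [/= Ca Cb]] <-]; rewrite in_itv /= => /andP[l0 l1].
    by exists l, a, b.
apply: continuous_compact; first exact/continuous_subspaceT/cont_cmb.
apply: compact_setX; first exact: segment_compact.
exact: compact_setX.
Qed.


Lemma conv_pts_compact (f : nat -> R * R) N : compact (conv_hull (pts f N.+1)).
Proof.
elim: N => [|N IH]; first by rewrite pts1 conv1; exact: compact_set1.
rewrite conv_ptsS; apply: join_compact => //; exact: compact_set1.
Qed.

Definition box (a1 b1 a2 b2 : R) : set (R * R) :=
  [set p | a1 <= p.1 <= b1 /\ a2 <= p.2 <= b2].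

Lemma cmb_ge (l x y c : R) : 0 <= l -> l <= 1 -> c <= x -> c <= y ->
  c <= l * x + (1 - l) * y.
Proof.
move=> l0 l1 cx cy; have h1 : l * c <= l * x by apply: ler_wpM2l.
have h2 : (1 - l) * c <= (1 - l) * y by apply: ler_wpM2l => //; lra.
lra.
Qed.

Lemma cmb_le (l x y c : R) : 0 <= l -> l <= 1 -> x <= c -> y <= c ->
  l * x + (1 - l) * y <= c.
Proof.
move=> l0 l1 cx cy; have h1 : l * x <= l * c by apply: ler_wpM2l.
have h2 : (1 - l) * y <= (1 - l) * c by apply: ler_wpM2l => //; lra.
lra.
Qed.

Lemma box_cvx a1 b1 a2 b2 : cvx (box a1 b1 a2 b2).
Proof.
move=> l p q l0 l1 [/andP[p1 p2] /andP[p3 p4]] [/andP[q1 q2] /andP[q3 q4]].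
rewrite /cmb /box /=; split; apply/andP; split.
- exact: cmb_ge.
- exact: cmb_le.
- exact: cmb_ge.
- exact: cmb_le.
Qed.

Lemma box_compact a1 b1 a2 b2 : compact (box a1 b1 a2 b2).
Proof.
have -> : box a1 b1 a2 b2 = `[a1, b1]%classic `*` `[a2, b2]%classic.
  apply/seteqP; split => p; rewrite /box /= !in_itv /=; by case.
by apply: compact_setX; exact: segment_compact.
Qed.

Lemma rect_box_gen (x y h k : R) :
  [set p : R * R | `|p.1 - x| <= h /\ `|p.2 - y| <= k] = box (x - h) (x + h) (y - k) (y + k).
Proof.
apply/seteqP; split => p; rewrite /box /= !ler_norml => -[/andP[? ?] /andP[? ?]];
  by split; apply/andP; split; lra.
Qed.

Lemma Rect_box (x1 y1 : R) : Rect x1 y1 =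
  box (x1 - 4625 / 10000 / 2) (x1 + 4625 / 10000 / 2)
      (y1 - 375 / 10000 / 2) (y1 + 375 / 10000 / 2).
Proof. exact: rect_box_gen. Qed.

Lemma compact_bound1 (A : set R) : compact A -> exists M, forall x, A x -> `|x| <= M.
Proof.
move=> /compact_bounded [M [_ HM]].
exists (`|M| + 1) => x Ax; apply: (HM (`|M| + 1)) => //.
have := ler_norm M; lra.
Qed.

Lemma compact_bound (K : set (R * R)) : compact K ->
  exists M, forall p, K p -> `|p.1| <= M /\ `|p.2| <= M.
Proof.
move=> cK.
have [M1 H1] : exists M, forall x, (fst @` K) x -> `|x| <= M.
  apply: compact_bound1; apply: continuous_compact => //.
  exact/continuous_subspaceT/cont_fst.
have [M2 H2] : exists M, forall x, (snd @` K) x -> `|x| <= M.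
  apply: compact_bound1; apply: continuous_compact => //.
  exact/continuous_subspaceT/cont_snd.
exists (Num.max M1 M2) => p Kp; split; rewrite le_max.
  by rewrite H1 //; exists p.
by rewrite H2 ?orbT //; exists p.
Qed.

End B.

Section C.
Variable R : realType.
Local Notation lam := (@lebesgue_measure R).

Definition intv (S : set R) := forall u v w, S u -> S v -> u <= w -> w <= v -> S w.

Lemma le_supinf (S : set R) : S !=set0 -> has_ubound S -> has_lbound S ->
  measurable (S : set (measurableTypeR R)) -> (lam S <= (sup S - inf S)%:E)%E.
Proof.
move=> [x0 Sx0] hu hl mS.
have sub : S `<=` `[inf S, sup S]%classic.
  by move=> x Sx; rewrite /= in_itv /= (ge_inf hl Sx) (ub_le_sup hu Sx).
have mI : measurable (`[inf S, sup S]%classic : set (measurableTypeR R)).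
  exact: measurable_itv.
apply: (le_trans (@le_measure _ _ _ lam _ _ (mem_set mS) (mem_set mI) sub)).
have iS : inf S <= sup S.
  by apply: (le_trans (ge_inf hl Sx0)); exact: (ub_le_sup hu Sx0).
have L := lebesgue_measure_itv `[inf S, sup S].
rewrite /= lte_fin in L.
rewrite le_eqVlt; apply/orP; left; apply/eqP; apply: (etrans L).
case: ifPn => // H; rewrite -leNgt in H.
have -> : inf S = sup S by apply/le_anti; rewrite iS H.
by rewrite subrr.

Qed.

Lemma ge_supinf (S : set R) : S !=set0 -> has_ubound S -> has_lbound S ->
  measurable (S : set (measurableTypeR R)) -> intv S -> ((sup S - inf S)%:E <= lam S)%E.
Proof.
move=> S0 hu hl mS iS.
have sub : `]inf S, sup S[%classic `<=` S.
  move=> x; rewrite /= in_itv /= => /andP[x1 x2].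
  have [y Sy yx] := inf_lt S0 x1.
  have [z Sz xz] := sup_gt S0 x2.
  by apply: (iS y z) => //; apply: ltW.
have mI : measurable (`]inf S, sup S[%classic : set (measurableTypeR R)).
  exact: measurable_itv.
apply: le_trans (@le_measure _ _ _ lam _ _ (mem_set mI) (mem_set mS) sub).
have L := lebesgue_measure_itv `]inf S, sup S[.
rewrite /= lte_fin in L.
have [x0 Sx0] := S0.
have : inf S <= sup S.
  by apply: (le_trans (ge_inf hl Sx0)); exact: (ub_le_sup hu Sx0).
rewrite le_eqVlt => /orP[/eqP E|E].
  by rewrite E subrr; apply: measure_ge0.
rewrite le_eqVlt; apply/orP; left; apply/eqP; apply/esym; apply: (etrans L).
by rewrite E.
Qed.

Lemma cmb_mono (a u v U V : R) : 0 <= a -> a <= 1 -> u <= U -> v <= V ->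
  a * u + (1 - a) * v <= a * U + (1 - a) * V.
Proof.
move=> a0 a1 uU vV; have h1 : a * u <= a * U by apply: ler_wpM2l.
have h2 : (1 - a) * v <= (1 - a) * V by apply: ler_wpM2l => //; lra.
lra.
Qed.

Lemma chord (X Y Z : set R) (a t s r M : R) :
  0 <= a -> a <= 1 -> r = a * t + (1 - a) * s ->
  measurable (X : set (measurableTypeR R)) -> measurable (Y : set (measurableTypeR R)) ->
  measurable (Z : set (measurableTypeR R)) ->
  (forall y, X y -> `|y| <= M) -> (forall y, Y y -> `|y| <= M) ->
  (forall y, Z y -> `|y| <= M) ->
  intv Y -> intv Z ->
  (forall y, X y -> exists sg, Y (y + (t - r) * sg) /\ Z (y + (s - r) * sg)) ->
  (lam X <= a%:E * lam Y + (1 - a)%:E * lam Z)%E.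
Proof.
move=> a0 a1 Er mX mY mZ bX bY bZ iY iZ tr.
have hu (S : set R) : (forall y, S y -> `|y| <= M) -> has_ubound S.
  move=> bS; exists M => y /bS; rewrite ler_norml => /andP[_ ->] //.
have hl (S : set R) : (forall y, S y -> `|y| <= M) -> has_lbound S.
  move=> bS; exists (- M) => y /bS; rewrite ler_norml => /andP[-> _] //.
have [X0|X0] := pselect (X !=set0); last first.
  have -> : X = set0 by apply/seteqP; split => // x Xx; apply: X0; exists x.
  rewrite measure0; apply: adde_ge0; apply: mule_ge0 => //; rewrite ?lee_fin; lra.
have [x0 Xx0] := X0.
have [sg0 [Y0 Z0]] := tr x0 Xx0.
have Y0' : Y !=set0 by eexists; exact: Y0.
have Z0' : Z !=set0 by eexists; exact: Z0.
have decomp (y sg : R) : y = a * (y + (t - r) * sg) + (1 - a) * (y + (s - r) * sg).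
  by rewrite Er; ring.
have supX : sup X <= a * sup Y + (1 - a) * sup Z.
  apply: ge_sup => // y Xy; have [sg [Ys Zs]] := tr y Xy.
  rewrite [y](decomp y sg); apply: cmb_mono => //.
    exact: (ub_le_sup (hu _ bY) Ys).
  exact: (ub_le_sup (hu _ bZ) Zs).
have infX : a * inf Y + (1 - a) * inf Z <= inf X.
  apply: lb_le_inf => // y Xy; have [sg [Ys Zs]] := tr y Xy.
  rewrite [y in _ <= y](decomp y sg); apply: cmb_mono => //.
    exact: (ge_inf (hl _ bY) Ys).
  exact: (ge_inf (hl _ bZ) Zs).
apply: (le_trans (le_supinf X0 (hu _ bX) (hl _ bX) mX)).
apply: (@le_trans _ _ (a%:E * (sup Y - inf Y)%:E + (1 - a)%:E * (sup Z - inf Z)%:E)%E).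
  rewrite -!EFinM -EFinD lee_fin; lra.
apply: leeD.
- apply: lee_wpmul2l; first by rewrite lee_fin.
  by apply: ge_supinf => //; [exact: hu|exact: hl].
- apply: lee_wpmul2l; first by rewrite lee_fin; lra.
  by apply: ge_supinf => //; [exact: hu|exact: hl].
Qed.


Definition bnd_by (M : R) (G : measurableTypeR R -> \bar R) :=
  forall x, (G x <= (2 * M)%:E * (\1_(`[- M, M]%classic : set (measurableTypeR R)) x)%:E)%E.

Lemma int_fin (G : measurableTypeR R -> \bar R) (M : R) : 0 <= M -> measurable_fun [set: measurableTypeR R] G ->
  (forall x, 0 <= G x)%E -> bnd_by M G -> (\int[lam]_x G x)%E \is a fin_num.
Proof.
move=> M0 mG G0 bG.
have mI : measurable (`[- M, M]%classic : set (measurableTypeR R)) by exact: measurable_itv.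
rewrite ge0_fin_numE; last exact: integral_ge0.
apply: (@le_lt_trans _ _ (\int[lam]_x ((2 * M)%:E * (\1_(`[- M, M]%classic : set (measurableTypeR R)) x)%:E))%E).
  apply: ge0_le_integral => //.
  apply: measurable_funeM; apply/measurable_EFinP.
  exact: measurable_indic.
rewrite ge0_integralZl_EFin //; last 2 first.
- by apply/measurable_EFinP; exact: measurable_indic.
- lra.
rewrite integral_indic //.
rewrite setIT.
have L := lebesgue_measure_itv `[- M, M].
rewrite /= lte_fin in L.
apply: lte_mul_pinfty => //; first by rewrite lee_fin; lra.
suff : (lebesgue_measure ([set` `[(- M)%R, M]] : set R) < +oo)%E by move=> h; exact: h.
rewrite L; case: ifPn => _; exact: ltry.
Qed.

Lemma int_convex (Gt Gs Gr : measurableTypeR R -> \bar R) (a M : R) :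
  0 <= a -> a <= 1 -> 0 <= M ->
  measurable_fun [set: measurableTypeR R] Gt -> measurable_fun setT Gs -> measurable_fun setT Gr ->
  (forall x, 0 <= Gt x)%E -> (forall x, 0 <= Gs x)%E -> (forall x, 0 <= Gr x)%E ->
  bnd_by M Gt -> bnd_by M Gs -> bnd_by M Gr ->
  (forall x, Gr x <= a%:E * Gt x + (1 - a)%:E * Gs x)%E ->
  fine (\int[lam]_x Gr x)%E <= a * fine (\int[lam]_x Gt x)%E + (1 - a) * fine (\int[lam]_x Gs x)%E.
Proof.
move=> a0 a1 M0 mt ms mr t0 s0 r0 bt bs br H.
have ft := int_fin M0 mt t0 bt.
have fs := int_fin M0 ms s0 bs.
have fr := int_fin M0 mr r0 br.
have I : (\int[lam]_x Gr x <= a%:E * \int[lam]_x Gt x + (1 - a)%:E * \int[lam]_x Gs x)%E.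
  have eT : (\int[lam]_x (a%:E * Gt x) = a%:E * \int[lam]_x Gt x)%E.
    by apply: ge0_integralZl_EFin => //.
  have eS : (\int[lam]_x ((1 - a)%:E * Gs x) = (1 - a)%:E * \int[lam]_x Gs x)%E.
    by apply: ge0_integralZl_EFin => //; lra.
  rewrite -eT -eS -ge0_integralD //.
  - apply: ge0_le_integral => //.
    apply: emeasurable_funD; exact: measurable_funeM.
  - by move=> x _; apply: mule_ge0; rewrite ?lee_fin.
  - exact: measurable_funeM.
  - by move=> x _; apply: mule_ge0; rewrite ?lee_fin //; lra.
  - exact: measurable_funeM.
rewrite -(fineK ft) -(fineK fs) -(fineK fr) -!EFinM -EFinD lee_fin in I.
exact: I.
Qed.

End C.

Section D.
Variable R : realType.
Local Notation lam := (@lebesgue_measure R).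

Lemma lam_le_box (S : set R) (M : R) : 0 <= M -> measurable (S : set (measurableTypeR R)) ->
  (forall y, S y -> `|y| <= M) -> (lam S <= (2 * M)%:E)%E.
Proof.
move=> M0 mS bS.
have mI : measurable (`[- M, M]%classic : set (measurableTypeR R)) by exact: measurable_itv.
have sub : S `<=` `[- M, M]%classic.
  by move=> y /bS; rewrite ler_norml /= in_itv /=.
apply: (le_trans (@le_measure _ _ _ lam _ _ (mem_set mS) (mem_set mI) sub)).
have L := lebesgue_measure_itv `[- M, M].
rewrite /= lte_fin in L.
suff : (lebesgue_measure ([set` `[(- M)%R, M]] : set R) <= (2 * M)%:E)%E by move=> h; exact: h.
rewrite L; case: ifPn => H; first by rewrite -EFinD lee_fin; lra.
by rewrite lee_fin; lra.
Qed.

Lemma sec_convex (sec : R -> R -> set R) (a t s r M : R) :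
  0 <= a -> a <= 1 -> 0 <= M -> r = a * t + (1 - a) * s ->
  (forall u, measurable_fun [set: measurableTypeR R] (fun x => lam (sec u x))) ->
  (forall u x, measurable (sec u x : set (measurableTypeR R))) ->
  (forall u, u = t \/ u = s \/ u = r -> forall x y, sec u x y -> `|x| <= M /\ `|y| <= M) ->
  (forall u x, intv (sec u x)) ->
  (forall x y, sec r x y -> exists sg, sec t x (y + (t - r) * sg) /\ sec s x (y + (s - r) * sg)) ->
  fine (\int[lam]_x lam (sec r x))%E <=
    a * fine (\int[lam]_x lam (sec t x))%E + (1 - a) * fine (\int[lam]_x lam (sec s x))%E.
Proof.
move=> a0 a1 M0 Er mG msec bnd iv tr.
have bb u : u = t \/ u = s \/ u = r -> bnd_by M (fun x => lam (sec u x)).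
  move=> hu x; rewrite /indic /=.
  have [xI|xI] := boolP (x \in (`[- M, M]%classic : set (measurableTypeR R))).
    rewrite /= mulr1n mule1; apply: lam_le_box => // y /(bnd u hu x) [].
    done.
  have -> : sec u x = set0.
    apply/seteqP; split => // y /(bnd u hu x) [hx _].
    by apply: (negP xI); apply/mem_set; rewrite /= in_itv /= -ler_norml hx.
  by rewrite measure0 /= mulr0n mule0.
apply: (int_convex a0 a1 M0 (mG t) (mG s) (mG r)).
- by move=> x; exact: measure_ge0.
- by move=> x; exact: measure_ge0.
- by move=> x; exact: measure_ge0.
- by apply: bb; left.
- by apply: bb; right; left.
- by apply: bb; right; right.
- move=> x; apply: (chord (M := M) a0 a1 Er) => //.
  + by move=> y /(bnd r (or_intror (or_intror erefl)) x) [].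
  + by move=> y /(bnd t (or_introl erefl) x) [].
  + by move=> y /(bnd s (or_intror (or_introl erefl)) x) [].
  + by move=> y /tr.
Qed.

End D.

Section E.
Variable R : realType.
Local Notation lam := (@lebesgue_measure R).

Lemma convex_RP (g : R -> R) :
  (forall a t s, 0 <= a -> a <= 1 -> g (a * t + (1 - a) * s) <= a * g t + (1 - a) * g s) ->
  convex_R g.
Proof. by move=> H l t s _ _; exact: (H _ _ _ (ge0 l) (le1 l)). Qed.

Lemma compact_measurable2 (K : set (R * R)) : compact K ->
  @measurable _ (measurableTypeR R * measurableTypeR R)%type K.
Proof.
move=> cK.
have clK : closed K by apply: compact_closed => //; exact: norm_hausdorff.
rewrite -[K]setCK; apply: measurableC; apply: open_measurable2.
by rewrite openC.
Qed.

Lemma cvx_intv_x (K : set (R * R)) x : cvx K -> intv (xsection K x).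
Proof.
move=> cK u v w; rewrite /xsection /= !inE => Ku Kv uw wv.
have [uv|uv] := eqVneq u v.
  have -> : w = u by apply/le_anti; rewrite uw andbT uv wv.
  by [].
have uv' : u < v by rewrite lt_neqAle uv (le_trans uw wv).
pose l := (v - w) / (v - u).
have l0 : 0 <= l by apply: divr_ge0; lra.
have l1 : l <= 1 by rewrite ler_pdivrMr; lra.
have := cK l _ _ l0 l1 Ku Kv; rewrite /cmb /=.
congr K; congr (_, _); first by ring.
rewrite /l; field; lra.
Qed.

Lemma cvx_intv_y (K : set (R * R)) y : cvx K -> intv (ysection K y).
Proof.
move=> cK u v w; rewrite /ysection /= !inE => Ku Kv uw wv.
have [uv|uv] := eqVneq u v.
  have -> : w = u by apply/le_anti; rewrite uw andbT uv wv.
  by [].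
have uv' : u < v by rewrite lt_neqAle uv (le_trans uw wv).
pose l := (v - w) / (v - u).
have l0 : 0 <= l by apply: divr_ge0; lra.
have l1 : l <= 1 by rewrite ler_pdivrMr; lra.
have := cK l _ _ l0 l1 Ku Kv; rewrite /cmb /=.
congr K; congr (_, _); last by ring.
rewrite /l; field; lra.
Qed.


Lemma bound3 (K : R -> set (R * R)) (t s r : R) :
  (forall u, compact (K u)) ->
  exists M, 0 <= M /\ forall u, u = t \/ u = s \/ u = r ->
    forall p, K u p -> `|p.1| <= M /\ `|p.2| <= M.
Proof.
move=> Kc.
have [Mt Ht] := compact_bound (Kc t).
have [Ms Hs] := compact_bound (Kc s).
have [Mr Hr] := compact_bound (Kc r).
exists (`|Mt| + `|Ms| + `|Mr|); split.
  by rewrite !addr_ge0.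
have nt := ler_norm Mt; have ns := ler_norm Ms; have nr := ler_norm Mr.
have gt := normr_ge0 Mt; have gs := normr_ge0 Ms; have gr := normr_ge0 Mr.
move=> u [->|[->|->]] p Kp.
- by have [h1 h2] := Ht p Kp; split; lra.
- by have [h1 h2] := Hs p Kp; split; lra.
- by have [h1 h2] := Hr p Kp; split; lra.
Qed.

Lemma vertical (K : R -> set (R * R)) :
  (forall t, compact (K t)) -> (forall t, cvx (K t)) ->
  (forall r p, K r p -> exists sg, forall t, K t (p.1, p.2 + (t - r) * sg)) ->
  convex_R (fun t => area (K t)).
Proof.
move=> Kc Kv Ktr; apply: convex_RP => a t s a0 a1.
set r := a * t + (1 - a) * s.
have [M [M0 HM]] := bound3 t s r Kc.
have H := @sec_convex R (fun u x => xsection (K u) x) a t s r M a0 a1 M0 erefl.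
apply: H.
- move=> u; exact: (measurable_fun_xsection lam (compact_measurable2 (Kc u))).
- move=> u x; exact: measurable_xsection (compact_measurable2 (Kc u)).
- move=> u hu x y; rewrite /xsection /= inE => Kxy.
  exact: (HM u hu (x, y) Kxy).
- move=> u x; exact: cvx_intv_x.
- move=> x y; rewrite /xsection /= inE => /Ktr [sg Hsg]; exists sg; rewrite !inE.
  by split; apply: Hsg.
Qed.

Lemma area_y (A : set (R * R)) : compact A ->
  area A = fine (\int[lam]_y lam (ysection A y))%E.
Proof.
move=> cA; have mA := compact_measurable2 cA.
rewrite /area /product_measure1.
have := indic_fubini_tonelli lam lam mA.
rewrite indic_fubini_tonelli_FE // indic_fubini_tonelli_GE // => ->.
by [].
Qed.

Lemma horizontal (K : R -> set (R * R)) :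
  (forall t, compact (K t)) -> (forall t, cvx (K t)) ->
  (forall r p, K r p -> exists sg, forall t, K t (p.1 + (t - r) * sg, p.2)) ->
  convex_R (fun t => area (K t)).
Proof.
move=> Kc Kv Ktr; apply: convex_RP => a t s a0 a1.
set r := a * t + (1 - a) * s.
rewrite !area_y //.
have [M [M0 HM]] := bound3 t s r Kc.
have H := @sec_convex R (fun u y => ysection (K u) y) a t s r M a0 a1 M0 erefl.
apply: H.
- move=> u; exact: (measurable_fun_ysection lam (compact_measurable2 (Kc u))).
- move=> u x; exact: measurable_ysection (compact_measurable2 (Kc u)).
- move=> u hu y x; rewrite /ysection /= inE => Kxy.
  by have [h1 h2] := HM u hu (x, y) Kxy.
- move=> u x; exact: cvx_intv_y.
- move=> y x; rewrite /ysection /= inE => /Ktr [sg Hsg]; exists sg; rewrite !inE.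
  by split; apply: Hsg.
Qed.

End E.

Section F.
Variable R : realType.

Lemma K_compact (C1 C2 C3 : set (R * R)) :
  compact C1 -> cvx C1 -> C1 !=set0 ->
  compact C2 -> cvx C2 -> C2 !=set0 ->
  compact C3 -> cvx C3 -> C3 !=set0 ->
  compact (conv_hull (C1 `|` C2 `|` C3)).
Proof.
move=> k1 v1 n1 k2 v2 n2 k3 v3 n3.
rewrite -(conv_hullU (C1 `|` C2) C3) (conv_cvx_eq v3) (conv_join v1 v2 n1 n2).
rewrite conv_join //.
- by apply: join_compact => //; exact: join_compact.
- exact: join_cvx.
- by have [a Ha] := n1; have [b Hb] := n2; exists a, 1, a, b; split => //;
    rewrite /cmb; case: a {Ha} => ? ? /=; congr (_, _); ring.
Qed.

Definition Fpt (k : nat) : R * R :=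
  (rr * cos (k%:R * pi / 250), rr * sin (k%:R * pi / 250)).

Definition Tpt (x2 y2 theta : R) (j : nat) : R * R :=
  (x2 + Num.sqrt 3 / 9 * cos (theta + 2 * pi * j%:R / 3),
   y2 + Num.sqrt 3 / 9 * sin (theta + 2 * pi * j%:R / 3)).

Lemma F500E : F500 = conv_hull (pts Fpt 500) :> set (R * R).
Proof. by []. Qed.

Lemma TriE (x2 y2 theta : R) : Tri x2 y2 theta = conv_hull (pts (Tpt x2 y2 theta) 3) :> set (R * R).
Proof. by []. Qed.

Lemma F500_props : compact (F500 : set (R * R)) /\ cvx (F500 : set (R * R)) /\
  (F500 : set (R * R)) !=set0.
Proof.
rewrite F500E; split; first exact: (@conv_pts_compact _ Fpt 499).
split; first exact: conv_cvx.
by exists (Fpt 0); apply: conv_sub; exists 0%N.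
Qed.

Lemma Tri_props (x2 y2 theta : R) : compact (Tri x2 y2 theta) /\ cvx (Tri x2 y2 theta) /\
  (Tri x2 y2 theta) !=set0.
Proof.
rewrite TriE; split; first exact: (@conv_pts_compact _ _ 2).
split; first exact: conv_cvx.
by exists (Tpt x2 y2 theta 0); apply: conv_sub; exists 0%N.
Qed.

Lemma Rect_props (x1 y1 : R) : compact (Rect x1 y1) /\ cvx (Rect x1 y1) /\
  (Rect x1 y1) !=set0.
Proof.
rewrite Rect_box; split; first exact: box_compact.
split; first exact: box_cvx.
exists (x1, y1); rewrite /box /=; split; apply/andP; split; lra.
Qed.

Lemma fz_compact (x1 y1 x2 y2 theta : R) :
  compact (conv_hull (F500 `|` Rect x1 y1 `|` Tri x2 y2 theta)).
Proof.
have [k1 [v1 n1]] := F500_props.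
have [k2 [v2 n2]] := Rect_props x1 y1.
have [k3 [v3 n3]] := Tri_props x2 y2 theta.
exact: K_compact.
Qed.

Lemma Tri_shift (a b a' b' theta d1 d2 : R) q :
  a' = a + d1 -> b' = b + d2 ->
  Tri a b theta q -> Tri a' b' theta (q.1 + d1, q.2 + d2).
Proof.
move=> -> -> Tq; rewrite TriE; apply: (conv_shift (d := (d1, d2)) Tq) => u [k [k3 ->]].
by exists k; split => //; rewrite /Tpt /=; congr (_, _); ring.
Qed.

End F.

Unset Implicit Arguments.

Theorem corollary1 (R : realType) (x1 y1 x2 y2 theta : R) :
  [/\ convex_R (fun t => fz t y1 x2 y2 theta),
      convex_R (fun t => fz x1 t x2 y2 theta),
      convex_R (fun t => fz x1 y1 t y2 theta) &
      convex_R (fun t => fz x1 y1 x2 t theta)].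
Proof.
split.
- apply: (horizontal (K := fun t => conv_hull (F500 `|` Rect t y1 `|` Tri x2 y2 theta))).
  + by move=> t; exact: fz_compact.
  + by move=> t; exact: conv_cvx.
  + move=> r p Kp.
    have [|sg H] := transport (S := fun t => F500 `|` Rect t y1 `|` Tri x2 y2 theta)
       (v := (1, 0)) _ Kp.
      move=> r' q [[Fq|Rq]|Tq].
      * by left => t; left; left.
      * right => t; left; right; rewrite /Rect /= mulr1 mulr0 addr0.
        by have -> : q.1 + (t - r') - t = q.1 - r' by ring.
      * by left => t; right.
    by exists sg => t; have := H t; rewrite /= mulr1 mulr0 addr0.
- apply: (vertical (K := fun t => conv_hull (F500 `|` Rect x1 t `|` Tri x2 y2 theta))).
  + by move=> t; exact: fz_compact.
  + by move=> t; exact: conv_cvx.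
  + move=> r p Kp.
    have [|sg H] := transport (S := fun t => F500 `|` Rect x1 t `|` Tri x2 y2 theta)
       (v := (0, 1)) _ Kp.
      move=> r' q [[Fq|Rq]|Tq].
      * by left => t; left; left.
      * right => t; left; right; rewrite /Rect /= mulr1 mulr0 addr0.
        by have -> : q.2 + (t - r') - t = q.2 - r' by ring.
      * by left => t; right.
    by exists sg => t; have := H t; rewrite /= mulr1 mulr0 addr0.
- apply: (horizontal (K := fun t => conv_hull (F500 `|` Rect x1 y1 `|` Tri t y2 theta))).
  + by move=> t; exact: fz_compact.
  + by move=> t; exact: conv_cvx.
  + move=> r p Kp.
    have [|sg H] := transport (S := fun t => F500 `|` Rect x1 y1 `|` Tri t y2 theta)
       (v := (1, 0)) _ Kp.
      move=> r' q [[Fq|Rq]|Tq].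
      * by left => t; left; left.
      * by left => t; left; right.
      * right => t; right; apply: (Tri_shift _ _ Tq) => /=; ring.
    by exists sg => t; have := H t; rewrite /= mulr1 mulr0 addr0.
- apply: (vertical (K := fun t => conv_hull (F500 `|` Rect x1 y1 `|` Tri x2 t theta))).
  + by move=> t; exact: fz_compact.
  + by move=> t; exact: conv_cvx.
  + move=> r p Kp.
    have [|sg H] := transport (S := fun t => F500 `|` Rect x1 y1 `|` Tri x2 t theta)
       (v := (0, 1)) _ Kp.
      move=> r' q [[Fq|Rq]|Tq].
      * by left => t; left; left.
      * by left => t; left; right.
      * right => t; right; apply: (Tri_shift _ _ Tq) => /=; ring.
    by exists sg => t; have := H t; rewrite /= mulr1 mulr0 addr0.
Qed.
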